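(* For $\lambda\in\mathbb{C}$ (not an eigenvalue of $D_{1,1}$), we can express \[ p_N(-\tau_i;\ \lambda)=\frac{r_i(\lambda)}{s(\lambda)},\quad i=1,\ldots,m, \] where $s$ is a monic polynomial of degree $N$ and $r_i$, $i=1,\ldots,m$, are polynomials of degree smaller than or equal to $N$. Furthermore, \[ s(\lambda)=\det(\lambda I-D_{1,1}) \] and \[ \left[\begin{array}{c} p_N(\theta_{N,-N};\ \lambda)\\ \vdots\\ p_N(\theta_{N,-1};\ \lambda)\end{array}\right]=(\lambda I-D_{1,1})^{-1}D_{1,2}. \]
   Context: Let $\tau_1,\ldots,\tau_m>0$ be delays and $\tau_{\max}=\max_i\tau_i$. Given a positive integer $N$, let $\theta_{N,i}$, $i=-N,\ldots,0$, be $N+1$ distinct points in $[-\tau_{\max},0]$ with $\theta_{N,0}=0$. Let $l_{N,k}$, $k\in\{-N,\ldots,0\}$, be the Lagrange polynomials of degree $N$ on these points ($l_{N,k}(\theta_{N,i})=1$ if $i=k$, $0$ otherwise). Let $D$ be the $(N+1)\times(N+1)$ differentiation matrix with entries $d_{i,k}=l'_{N,k}(\theta_{N,i})$, $i,k\in\{-N,\ldots,0\}$, partitioned as $D=\begin{bmatrix}D_{1,1}&D_{1,2}\\ D_{2,1}&D_{2,2}\end{bmatrix}$, where $D_{1,1}$ is the $N\times N$ block with $i,k\in\{-N,\ldots,-1\}$ and $D_{1,2}$ is the $N\times 1$ column with $i\in\{-N,\ldots,-1\}$, $k=0$. For $\lambda\in\mathbb{C}$, $p_N(\cdot;\lambda)$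 denotes the polynomial of degree $N$ satisfying $p_N(0;\lambda)=1$ and $p_N'(\theta_{N,i};\lambda)=\lambda\, p_N(\theta_{N,i};\lambda)$ for $i\in\{-N,\ldots,-1\}$ (a collocation approximation of $e^{\lambda t}$). *)

(* Defs.v *)
From HB Require Import structures.
From mathcomp Require Export all_boot all_order all_algebra.
From mathcomp Require Export complex reals.

Set Implicit Arguments.
Unset Strict Implicit.
Unset Printing Implicit Defensive.
Import Order.TTheory GRing.Theory Num.Theory.
Local Open Scope ring_scope.

(* Index convention: the node theta_{N,i}, i in {-N,...,0}, is represented by
   theta j with j : 'I_N.+1 and j = i + N.  Thus ord_max corresponds to
   theta_{N,0} = 0 and the indices 0..N-1 (= widen_ord of 'I_N) correspond to
   -N, ..., -1. *)

Section Collocation.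
Variable R : realType.
Variable N : nat.
Variable theta : 'I_N.+1 -> R.

Definition thetaC (j : 'I_N.+1) : R[i] := ((theta j)%:C)%C.

Definition lagrange (k : 'I_N.+1) : {poly R[i]} :=
  \prod_(j < N.+1 | j != k) (('X - (thetaC j)%:P) * ((thetaC k - thetaC j)^-1)%:P).

Definition diffmx : 'M[R[i]]_N.+1 :=
  \matrix_(i, k) ((lagrange k)^`()).[thetaC i].

Definition lowN (i : 'I_N) : 'I_N.+1 := widen_ord (leqnSn N) i.

Definition D11 : 'M[R[i]]_N := \matrix_(i, k) diffmx (lowN i) (lowN k).

Definition D12 : 'cV[R[i]]_N := \col_i diffmx (lowN i) ord_max.

Definition is_pN (lambda : R[i]) (p : {poly R[i]}) : Prop :=
  (size p <= N.+1)%N /\ p.[0] = 1 /\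
  forall i : 'I_N, p^`().[thetaC (lowN i)] = lambda * p.[thetaC (lowN i)].

End Collocation.

(* Main.v *)
Require Import Defs.
From HB Require Import structures.
From mathcomp Require Import all_boot all_order all_algebra complex reals.
From mathcomp Require Import zify.

Set Implicit Arguments.
Unset Strict Implicit.
Unset Printing Implicit Defensive.
Import Order.TTheory GRing.Theory Num.Theory.
Local Open Scope ring_scope.

Lemma size_prod_le2 (F : fieldType) (I : Type) (r : seq I) (P : pred I)
  (G : I -> {poly F}) :
  (forall i, P i -> (size (G i) <= 2)%N) ->
  (size (\prod_(i <- r | P i) G i)%R <= (\sum_(i <- r | P i) 1)%N.+1)%N.
Proof.
move=> HG.
elim: r => [|a r IH]; first by rewrite !big_nil size_poly1.
rewrite !big_cons; case: (boolP (P a)) => // Pa.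
apply: leq_trans (size_polyMleq _ _) _.
have := HG a Pa; move: IH.
move: (size (G a)) (size (\prod_(j <- r | P j) G j)) (\sum_(j <- r | P j) 1)%N.
move=> x y z; lia.
Qed.

Lemma size_det_le2 (F : fieldType) n (M : 'M[{poly F}]_n) :
  (forall i j, (size (M i j) <= 2)%N) -> (size (\det M) <= n.+1)%N.
Proof.
move=> HM; rewrite /determinant.
apply: (big_ind (fun p : {poly F} => (size p <= n.+1)%N)) => [|p q Hp Hq|s _].
- by rewrite size_poly0.
- by apply: leq_trans (size_polyD _ _) _; rewrite geq_max Hp Hq.
rewrite size_Msign.
apply: leq_trans (size_prod_le2 _ _) _ => [i _|]; first exact: HM.
by rewrite sum1_card card_ord.
Qed.

Section Interp.
Variable R : realType.
Variable N : nat.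
Variable theta : 'I_N.+1 -> R.
Hypothesis inj : injective theta.
Local Notation xC := (thetaC theta).

Lemma xinj : injective xC.
Proof. by move=> a b /complexI /inj. Qed.

Lemma lagrange_node j k : (Defs.lagrange theta k).[xC j] = (j == k)%:R.
Proof.
rewrite /Defs.lagrange horner_prod.
case: eqP => [->|/eqP njk].
  apply: big1 => i ik; rewrite hornerM hornerXsubC hornerC mulfV //.
  by rewrite subr_eq0; apply/eqP => /xinj /eqP; rewrite eq_sym (negPf ik).
rewrite (bigD1 j) //= hornerM hornerXsubC hornerC subrr !mul0r //.
Qed.

Lemma size_lagrange k : (size (Defs.lagrange theta k) <= N.+1)%N.
Proof.
rewrite /Defs.lagrange; apply: leq_trans (size_prod_le2 _ _) _ => [i _|].
  by rewrite mulrC mul_polyC; apply: leq_trans (size_scale_leq _ _) _; rewrite size_XsubC.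
rewrite sum1_card ltnS.
have -> : #|[pred j : 'I_N.+1 | j != k]| = #|predC1 k| by apply: eq_card.
by rewrite cardC1 card_ord.
Qed.

Lemma size_sum_le (I : Type) (r : seq I) (P : pred I) (G : I -> {poly R[i]}) n :
  (forall i, P i -> (size (G i) <= n)%N) ->
  (size (\sum_(i <- r | P i) G i)%R <= n)%N.
Proof.
move=> HG; apply: (big_ind (fun p : {poly R[i]} => (size p <= n)%N)) => //.
- by rewrite size_poly0.
- by move=> p q Hp Hq; apply: leq_trans (size_polyD _ _) _; rewrite geq_max Hp Hq.
Qed.

Lemma interp (p : {poly R[i]}) : (size p <= N.+1)%N ->
  p = \sum_k p.[xC k] *: Defs.lagrange theta k.
Proof.
move=> sp; apply/eqP; rewrite -subr_eq0; apply/eqP.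
set q := _ - _.
have sq : (size q <= N.+1)%N.
  apply: leq_trans (size_polyD _ _) _; rewrite geq_max sp size_polyN.
  by apply: size_sum_le => k _; apply: leq_trans (size_scale_leq _ _) _; apply: size_lagrange.
have rq : forall j, q.[xC j] = 0.
  move=> j; rewrite /q hornerD hornerN horner_sum.
  rewrite (bigD1 j) //= big1 => [|k kj]; last first.
    by rewrite hornerZ lagrange_node eq_sym (negPf kj) mulr0.
  by rewrite hornerZ lagrange_node eqxx mulr1 addr0 subrr.
apply/eqP; apply: contraT => qn0.
have := max_poly_roots qn0 (rs := [seq xC j | j <- enum 'I_N.+1]).
rewrite size_map size_enum_ord ltnNge sq /= => H; apply: H.
- by apply/allP => y /mapP [j _ ->]; apply/rootP; exact: rq.
- by rewrite map_inj_uniq ?enum_uniq //; exact: xinj.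
Qed.

Lemma deriv_node (p : {poly R[i]}) j : (size p <= N.+1)%N ->
  p^`().[xC j] = \sum_k p.[xC k] * Defs.diffmx theta j k.
Proof.
move=> sp; rewrite {1}(interp sp) raddf_sum horner_sum /=.
by apply: eq_bigr => k _; rewrite derivZ hornerZ /Defs.diffmx mxE.
Qed.

Hypothesis th0 : theta ord_max = 0.

Lemma xC_max : xC ord_max = 0.
Proof. by rewrite /thetaC th0. Qed.

Lemma deriv_low (p : {poly R[i]}) (i : 'I_N) : (size p <= N.+1)%N -> p.[0] = 1 ->
  p^`().[xC (Defs.lowN i)] =
  (Defs.D11 theta *m (\col_j p.[xC (Defs.lowN j)]) + Defs.D12 theta) i 0.
Proof.
move=> sp p0; rewrite deriv_node // big_ord_recr /= xC_max p0 mul1r.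
rewrite !mxE; congr (_ + _); apply: eq_bigr => k _.
by rewrite !mxE mulrC.
Qed.
End Interp.

Lemma eval_char_mx (F : fieldType) n (A : 'M[F]_n) l :
  map_mx (horner_eval l) (char_poly_mx A) = l%:M - A.
Proof.
apply/matrixP => i j; rewrite !mxE /= horner_evalE hornerD hornerN hornerMn hornerX hornerC.
by [].
Qed.

Lemma char_poly_eval (F : fieldType) n (A : 'M[F]_n) l :
  (char_poly A).[l] = \det (l%:M - A).
Proof. by rewrite -eval_char_mx det_map_mx. Qed.

Lemma size_adj_char (F : fieldType) n (A : 'M[F]_n) i j :
  (size (cofactor (char_poly_mx A) i j) <= n.+1)%N.
Proof.
rewrite /cofactor size_Msign.
apply: leq_trans (size_det_le2 _) _ => [a b|]; last by rewrite ltnS leq_pred.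
rewrite !mxE; apply: leq_trans (size_polyD _ _) _.
rewrite geq_max size_polyN size_polyC (leq_trans (leq_b1 _)) // andbT.
by case: (_ == _); rewrite ?mulr1n ?mulr0n ?size_polyX ?size_poly0.
Qed.
Theorem proposition3 (R : realType) (m N : nat) (tau : 'I_m -> R)
    (theta : 'I_N.+1 -> R) :
  (0 < m)%N -> (0 < N)%N ->
  (forall i, 0 < tau i) ->
  injective theta ->
  theta ord_max = 0 ->
  (forall j, - (\big[Num.max/0]_(i < m) tau i) <= theta j <= 0) ->
  exists (s : {poly R[i]}) (r : 'I_m -> {poly R[i]}),
    [/\ s \is monic, size s = N.+1,
        (forall i, (size (r i) <= N.+1)%N),
        (forall lambda : R[i], s.[lambda] = \det (lambda%:M - D11 theta)) &
        forall lambda : R[i], ~~ eigenvalue (D11 theta) lambda ->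
          (exists p, is_pN theta lambda p) /\
          forall p, is_pN theta lambda p ->
            (forall i, p.[- ((tau i)%:C)%C] = (r i).[lambda] / s.[lambda]) /\
            \col_(j < N) p.[thetaC theta (lowN j)]
              = invmx (lambda%:M - D11 theta) *m D12 theta].
Proof.
move=> _ _ _ inj th0 _.
set A := Defs.D11 theta; set B := Defs.D12 theta.
set s := char_poly A.
pose y i := (- ((tau i)%:C)%C : R[i]).
pose c i k := (Defs.lagrange theta k).[y i].
pose r i := \sum_(k < N) c i (Defs.lowN k) *: (\adj (char_poly_mx A) *m map_mx polyC B) k 0
   + c i ord_max *: s.
exists s, r; split.
- exact: char_poly_monic.
- exact: size_char_poly.
- move=> i; apply: leq_trans (size_polyD _ _) _; rewrite geq_max; apply/andP; split.
    apply: size_sum_le => k _; apply: leq_trans (size_scale_leq _ _) _.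
    rewrite mxE; apply: size_sum_le => j _; rewrite [X in X * _]mxE mxE mulrC mul_polyC.
    by apply: leq_trans (size_scale_leq _ _) _; apply: size_adj_char.
  by apply: leq_trans (size_scale_leq _ _) _; rewrite size_char_poly.
- by move=> l; rewrite char_poly_eval.
move=> l nev.
set M := l%:M - A.
have detM : \det M != 0.
  by move: nev; rewrite eigenvalue_root_char /root char_poly_eval.
have Mu : M \in unitmx by rewrite unitmxE unitfE.
set P0 := invmx M *m B.
have MP : M *m P0 = B by rewrite /P0 mulKVmx.
have lowE j k : (Defs.lowN j == Defs.lowN k) = (j == k).
  by rewrite /Defs.lowN; apply/eqP/eqP => [/(congr1 val) /= /val_inj|->].
have lowM j : (Defs.lowN j == ord_max) = false.
  by apply/negbTE; rewrite /Defs.lowN -val_eqE /= neq_ltn ltn_ord.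
have key : forall p : {poly R[i]}, (size p <= N.+1)%N -> p.[0] = 1 ->
   (forall i : 'I_N, p^`().[thetaC theta (Defs.lowN i)] = l * p.[thetaC theta (Defs.lowN i)])
   <-> M *m (\col_j p.[thetaC theta (Defs.lowN j)]) = B.
  move=> p sp p0; set P := \col_j _; split.
    move=> hp; apply/matrixP => i j; rewrite (ord1 j) {j}.
    have := hp i; rewrite (deriv_low inj th0 _ sp p0) -/A -/B -/P => H.
    rewrite /M mulmxBl mul_scalar_mx mxE [(l *: P) i 0]mxE [P i 0]mxE -H mxE.
    by rewrite [X in _ + X]mxE addrAC subrr add0r.
  move=> HM i; rewrite (deriv_low inj th0 _ sp p0) -/A -/B -/P -HM.
  rewrite /M mulmxBl mul_scalar_mx addrC subrK mxE [P i 0]mxE //.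
have xmax := xC_max th0.
split.
  pose p := \sum_(k < N) P0 k 0 *: Defs.lagrange theta (Defs.lowN k) + Defs.lagrange theta ord_max.
  have sp : (size p <= N.+1)%N.
    apply: leq_trans (size_polyD _ _) _; rewrite geq_max size_lagrange // andbT.
    by apply: size_sum_le => k _; apply: leq_trans (size_scale_leq _ _) _; apply: size_lagrange.
  have pnode j : p.[thetaC theta (Defs.lowN j)] = P0 j 0.
    rewrite hornerD horner_sum lagrange_node // lowM addr0.
    rewrite (bigD1 j) //= big1 => [|k kj]; last by rewrite hornerZ lagrange_node // lowE eq_sym (negPf kj) mulr0.
    by rewrite hornerZ lagrange_node // eqxx mulr1 addr0.
  have p0 : p.[0] = 1.
    rewrite -xmax hornerD horner_sum lagrange_node // eqxx big1 ?add0r // => k _.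
    by rewrite hornerZ lagrange_node // eq_sym lowM mulr0.
  have colE : \col_j p.[thetaC theta (Defs.lowN j)] = P0.
    by apply/matrixP => j k; rewrite (ord1 k) mxE pnode.
  exists p; split; first done; split; first done.
  by apply/(key p sp p0); rewrite colE.
move=> p [sp [p0 hp]].
have HM := (key p sp p0).1 hp.
have colE : \col_j p.[thetaC theta (Defs.lowN j)] = P0 by rewrite /P0 -HM mulKmx.
split; last by rewrite colE.
move=> i; rewrite {1}(interp inj sp) horner_sum big_ord_recr /= hornerZ xmax p0 mul1r.
have pk k : p.[thetaC theta (Defs.lowN k)] = (\det M)^-1 * (\adj M *m B) k 0.
  move/matrixP/(_ k 0): colE.
  by rewrite mxE => ->; rewrite /P0 /invmx Mu -scalemxAl mxE.
have evM : map_mx (horner_eval l) (\adj (char_poly_mx A) *m map_mx polyC B) = \adj M *m B.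
  rewrite map_mxM map_mx_adj eval_char_mx; congr (_ *m _).
  by apply/matrixP => a b; rewrite !mxE /= horner_evalE hornerC.
have ev k : ((\adj (char_poly_mx A) *m map_mx polyC B) k 0).[l] = (\adj M *m B) k 0.
  by rewrite -evM [RHS]mxE horner_evalE.
have sl : s.[l] = \det M by rewrite char_poly_eval.
rewrite /r hornerD horner_sum hornerZ mulrDl sl mulfK //; congr (_ + _).
rewrite mulr_suml; apply: eq_bigr => k _.
rewrite !hornerZ ev pk /c /y /Defs.lowN.
by rewrite [LHS]mulrC [_^-1 * _]mulrC mulrA.
Qed.
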